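(* Let $\Theta$ be a causal theory over $\mathfrak L$, let $\Gamma\subseteq\mathfrak L$ be a set of non-modal formulas and $p\in\mathcal L_\Box$, and suppose $\Gamma\vdash_\Box\Box p$ is derivable in $\mathbf S_\Theta$. Then there are a finite set $\Gamma'\subseteq\Gamma$ and non-modal formulas $a,b\in\mathfrak L$ such that $\Gamma'\vdash a$ (classically), and $a\vdash_\Box\Box b$ and $b\vdash_\Box p$ are derivable in $\mathbf S_\Theta$.
   Context: $\mathfrak L$ is a classical propositional language with classical consequence $\vdash$. A causal rule is $\phi\triangleright\psi$ with $\phi,\psi\in\mathfrak L$; a causal theory $\Theta$ is a set of causal rules. $\mathcal L_\Box$ is generated by $\mathfrak L$ and a unary $\Box$. The sequent calculus $\mathbf S_\Theta$ derives sequents $\Gamma\vdash_\Box\Delta$ (collections of $\mathcal L_\Box$-formulas, possibly infinite; derivations well-founded, possibly infinitely branching) via: axiom $p\vdash_\Box p$; $\perp\vdash_\Box$; $\vdash_\Box\top$; weakening and contraction on both sides; classical two-sided LK rules for $\neg,\wedge,\vee,\to$ with shared contexts; $\Box$R: if $\phi_1\triangleright\psi_1,\dots,\phi_k\triangleright\psi_k\in\Theta$ and $\psi_1,\dots,\psi_k\vdash_\Box p$ is derivable, from $\Gamma\vdash_\Box\phi_1\wedge\dots\wedge\phi_k,\Delta$ infer $\Gamma\vdash_\Box\Box p,\Delta$; $\Box$L: letting $\{S_j\}_{j\in J}$ be all finite $S_j\subseteq\Theta$ with $\{\psi:\phi\triangleright\psi\in S_j\}\vdash_\Box p$ derivable,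 from $\Gamma,\{\phi:\phi\triangleright\psi\in S_j\}\vdash_\Box\Delta$ for all $j\in J$ infer $\Gamma,\Box p\vdash_\Box\Delta$; multicut: from $\Gamma\vdash_\Box p^m,\Delta$ and $\Gamma',p^n\vdash_\Box\Delta'$ ($m,n>0$) infer $\Gamma,\Gamma'\vdash_\Box\Delta,\Delta'$. *)

(* Defs.v *)
From Stdlib Require Import List.
Import ListNotations.
Set Implicit Arguments.

Inductive fm (A : Type) : Type :=
| FVar : A -> fm A
| FBot : fm A
| FTop : fm A
| FNeg : fm A -> fm A
| FAnd : fm A -> fm A -> fm A
| FOr  : fm A -> fm A -> fm A
| FImp : fm A -> fm A -> fm A.
Arguments FBot {A}. Arguments FTop {A}.

Inductive bfm (A : Type) : Type :=
| BVar : A -> bfm A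
| BBot : bfm A
| BTop : bfm A
| BNeg : bfm A -> bfm A
| BAnd : bfm A -> bfm A -> bfm A
| BOr  : bfm A -> bfm A -> bfm A
| BImp : bfm A -> bfm A -> bfm A
| Box  : bfm A -> bfm A.
Arguments BBot {A}. Arguments BTop {A}.

Fixpoint emb {A} (f : fm A) : bfm A :=
  match f with
  | FVar a => BVar a
  | FBot => BBot
  | FTop => BTop
  | FNeg g => BNeg (emb g)
  | FAnd g h => BAnd (emb g) (emb h)
  | FOr g h => BOr (emb g) (emb h)
  | FImp g h => BImp (emb g) (emb h)
  end.

Fixpoint eval {A} (v : A -> Prop) (f : fm A) : Prop :=
  match f with
  | FVar a => v a
  | FBot => False
  | FTop => True
  | FNeg g => ~ eval v g
  | FAnd g h => eval v g /\ eval v h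
  | FOr g h => eval v g \/ eval v h
  | FImp g h => eval v g -> eval v h
  end.

Definition cl_conseq {A} (G : list (fm A)) (a : fm A) : Prop :=
  forall v : A -> Prop, (forall g, In g G -> eval v g) -> eval v a.

(* Causal theory: a set of causal rules phi |> psi *)
Definition causal_theory (A : Type) := fm A -> fm A -> Prop.

(* Sequent sides: (possibly infinite) sets of L_Box formulas *)
Definition fset (A : Type) := bfm A -> Prop.
Definition sempty {A} : fset A := fun _ => False.
Definition sing {A} (f : bfm A) : fset A := fun g => g = f.
Definition add {A} (X : fset A) (f : bfm A) : fset A := fun g => X g \/ g = f.
Definition sunion {A} (X Y : fset A) : fset A := fun g => X g \/ Y g.
Definition subset {A} (X Y : fset A) : Prop := forall g, X g -> Y g.
Definition of_list {A} (l : list (fm A)) : fset A := fun g => exists f, In f l /\ g = emb f.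
Definition emb_set {A} (G : fm A -> Prop) : fset A := fun g => exists f, G f /\ g = emb f.

Fixpoint bigand {A} (l : list (fm A)) : fm A :=
  match l with
  | [] => FTop
  | [f] => f
  | f :: r => FAnd f (bigand r)
  end.

Definition in_theory {A} (Th : causal_theory A) (l : list (fm A * fm A)) : Prop :=
  forall r, In r l -> Th (fst r) (snd r).

(* The calculus S_Theta, relative to an oracle R deciding the side conditions
   "psi_1,...,psi_k |-_Box p is derivable" of the Box rules.  The actual
   S_Theta is obtained by requiring R to be derivability itself (S_fixpoint). *)
Inductive Der {A} (Th : causal_theory A) (R : fset A -> fset A -> Prop)
  : fset A -> fset A -> Prop :=
| D_ax : forall p, Der Th R (sing p) (sing p)
| D_bot : Der Th R (sing BBot) sempty
| D_top : Der Th R sempty (sing BTop)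
| D_weak : forall G D G' D', Der Th R G D -> subset G G' -> subset D D' -> Der Th R G' D'
| D_negL : forall G D f, Der Th R G (add D f) -> Der Th R (add G (BNeg f)) D
| D_negR : forall G D f, Der Th R (add G f) D -> Der Th R G (add D (BNeg f))
| D_andL : forall G D f g, Der Th R (add (add G f) g) D -> Der Th R (add G (BAnd f g)) D
| D_andR : forall G D f g, Der Th R G (add D f) -> Der Th R G (add D g) ->
    Der Th R G (add D (BAnd f g))
| D_orL : forall G D f g, Der Th R (add G f) D -> Der Th R (add G g) D ->
    Der Th R (add G (BOr f g)) D
| D_orR : forall G D f g, Der Th R G (add (add D f) g) -> Der Th R G (add D (BOr f g))
| D_impL : forall G D f g, Der Th R G (add D f) -> Der Th R (add G g) D ->
    Der Th R (add G (BImp f g)) D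
| D_impR : forall G D f g, Der Th R (add G f) (add D g) -> Der Th R G (add D (BImp f g))
| D_boxR : forall G D (l : list (fm A * fm A)) p,
    in_theory Th l ->
    R (of_list (map snd l)) (sing p) ->
    Der Th R G (add D (emb (bigand (map fst l)))) ->
    Der Th R G (add D (Box p))
| D_boxL : forall G D p,
    (forall l : list (fm A * fm A), in_theory Th l ->
       R (of_list (map snd l)) (sing p) ->
       Der Th R (sunion G (of_list (map fst l))) D) ->
    Der Th R (add G (Box p)) D
| D_cut : forall G D G' D' p,
    Der Th R G (add D p) -> Der Th R (add G' p) D' ->
    Der Th R (sunion G G') (sunion D D').

Definition S_fixpoint {A} (Th : causal_theory A) (R : fset A -> fset A -> Prop) : Prop :=
  forall G D, R G D <-> Der Th R G D.

(* Main.v *)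
Require Import Defs.
From Stdlib Require Import List Classical.
Import ListNotations.

Definition W (A : Type) := fm A -> Prop.
Definition wext {A} (S S' : W A) := forall x, S x -> S' x.
Definition addw {A} (S : W A) (c : fm A) : W A := fun x => S x \/ x = c.
Definition fin {A} (S : W A) (a : fm A) : Prop :=
  exists L, (forall x, In x L -> S x) /\ cl_conseq L a.
Definition cons {A} (S : W A) := ~ fin S FBot.
Definition dense {A} (P : W A -> Prop) (S : W A) :=
  forall S', cons S' -> wext S S' -> exists S'', cons S'' /\ wext S' S'' /\ P S''.

Definition qual {A} (Th : causal_theory A) (R : fset A -> fset A -> Prop) (q : bfm A)
  (l : list (fm A * fm A)) := in_theory Th l /\ R (of_list (map snd l)) (sing q).

Fixpoint force {A} (Th : causal_theory A) (R : fset A -> fset A -> Prop) (f : bfm A) (S : W A) : Prop :=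
  match f with
  | BVar a => fin S (FVar a)
  | BBot => False
  | BTop => True
  | BNeg g => forall S', cons S' -> wext S S' -> ~ force Th R g S'
  | BAnd g h => force Th R g S /\ force Th R h S
  | BOr g h => dense (fun S => force Th R g S \/ force Th R h S) S
  | BImp g h => forall S', cons S' -> wext S S' -> force Th R g S' -> force Th R h S'
  | Box q => dense (fun S => exists l, qual Th R q l /\ fin S (bigand (map fst l))) S
  end.

Lemma fin_mono {A} (S S' : W A) a : wext S S' -> fin S a -> fin S' a.
Proof. intros H [L [H1 H2]]; exists L; split; auto. Qed.

Lemma fin_in {A} (S : W A) a : S a -> fin S a.
Proof. intros H; exists [a]; split; [intros x [<-|[]]; auto|]. intros v Hv; apply Hv; left; auto. Qed.

Lemma fin_1 {A} (S : W A) a b : (forall v, eval v a -> eval v b) -> fin S a -> fin S b.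
Proof. intros Hab [L [H1 H2]]; exists L; split; auto. intros v Hv; apply Hab, H2, Hv. Qed.

Lemma fin_2 {A} (S : W A) a b c : (forall v, eval v a -> eval v b -> eval v c) -> fin S a -> fin S b -> fin S c.
Proof.
  intros H [L [H1 H2]] [L' [H1' H2']]; exists (L ++ L'); split.
  - intros x Hx; apply in_app_or in Hx; destruct Hx; auto.
  - intros v Hv; apply H; [apply H2|apply H2']; intros g Hg; apply Hv, in_or_app; auto.
Qed.

Lemma split_list {A} (S : W A) c (L : list (fm A)) :
  (forall x, In x L -> addw S c x) ->
  exists L', (forall x, In x L' -> S x) /\
    forall v, (forall g, In g L' -> eval v g) -> eval v c -> forall g, In g L -> eval v g.
Proof.
  induction L as [|x L IH]; intros H.
  - exists []; split; [intros _ []|intros v _ _ g []].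
  - destruct IH as [L' [H1 H2]]. { intros y Hy; apply H; right; auto. }
    destruct (H x (or_introl eq_refl)) as [Hx|Hx].
    + exists (x :: L'); split.
      * intros y [<-|Hy]; auto.
      * intros v Hv Hc g [<-|Hg]. apply Hv; left; auto.
        apply (H2 v); auto. intros g' Hg'; apply Hv; right; auto.
    + exists L'; split; auto. intros v Hv Hc g [<-|Hg]; subst; [auto|apply (H2 v); auto].
Qed.

Lemma fin_ded {A} (S : W A) c b : fin (addw S c) b -> fin S (FImp c b).
Proof.
  intros [L [H1 H2]]. destruct (split_list S c L H1) as [L' [H3 H4]].
  exists L'; split; auto. intros v Hv Hc; simpl. apply H2. apply H4; auto.
Qed.

Lemma cons_add {A} (S : W A) c : ~ fin S (FNeg c) -> cons (addw S c).
Proof.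
  intros H Hf; apply H. apply fin_ded in Hf. revert Hf; apply fin_1. simpl; auto.
Qed.

Lemma cons_addn {A} (S : W A) c : ~ fin S c -> cons (addw S (FNeg c)).
Proof.
  intros H Hf; apply H. apply fin_ded in Hf. revert Hf; apply fin_1. simpl.
  intros v Hv. apply NNPP. auto.
Qed.

Lemma wext_refl {A} (S : W A) : wext S S. Proof. intros x; auto. Qed.
Lemma wext_trans {A} (S1 S2 S3 : W A) : wext S1 S2 -> wext S2 S3 -> wext S1 S3.
Proof. intros H1 H2 x Hx; auto. Qed.
Lemma wext_add {A} (S : W A) c : wext S (addw S c).
Proof. intros x Hx; left; auto. Qed.

Lemma dense_mono {A} (P Q : W A -> Prop) S : (forall S, P S -> Q S) -> dense P S -> dense Q S.
Proof. intros H D S' c e. destruct (D S' c e) as [S'' [c' [e' p]]]; eauto. Qed.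

Lemma dense_monoc {A} (P Q : W A -> Prop) S : (forall S, cons S -> P S -> Q S) -> dense P S -> dense Q S.
Proof. intros H D S' c e. destruct (D S' c e) as [S'' [c' [e' p]]]; eauto. Qed.

Lemma dense_ext {A} (P : W A -> Prop) S S' : wext S S' -> dense P S -> dense P S'.
Proof. intros e D S2 c e2. apply D; auto. eapply wext_trans; eauto. Qed.

Lemma dense_idem {A} (P : W A -> Prop) S : dense (dense P) S -> dense P S.
Proof.
  intros D S' c e. destruct (D S' c e) as [S2 [c2 [e2 D2]]].
  destruct (D2 S2 c2 (wext_refl _)) as [S3 [c3 [e3 p]]].
  exists S3; split; [|split]; auto. eapply wext_trans; eauto.
Qed.

Lemma dense_intro {A} (P : W A -> Prop) S :
  (forall S S', P S -> wext S S' -> P S') -> P S -> dense P S.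
Proof. intros M p S' c e. exists S'; split; [|split]; auto. apply wext_refl. eapply M; eauto. Qed.

Lemma dense_fin {A} (S : W A) a : cons S -> dense (fun S => fin S a) S -> fin S a.
Proof.
  intros c D. apply NNPP; intros H.
  destruct (D _ (cons_addn S a H) (wext_add S _)) as [S2 [c2 [e2 f2]]].
  apply c2. eapply fin_2; [|exact f2|apply fin_in, e2; right; reflexivity]. simpl; auto.
Qed.



Lemma force_mono {A} Th R (f : bfm A) : forall S S', wext S S' -> force Th R f S -> force Th R f S'.
Proof.
  induction f; simpl; intros S S' e H.
  - eapply fin_mono; eauto.
  - auto.
  - auto.
  - intros S2 c e2. apply H; auto. eapply wext_trans; eauto.
  - destruct H; split; eauto.
  - eapply dense_ext; eauto.
  - intros S2 c e2. apply H; auto. eapply wext_trans; eauto.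
  - eapply dense_ext; eauto.
Qed.

Lemma force_reg {A} Th R (f : bfm A) : forall S, cons S -> dense (force Th R f) S -> force Th R f S.
Proof.
  induction f; simpl; intros S c D.
  - apply dense_fin; auto.
  - destruct (D S c (wext_refl _)) as [? [? [? []]]].
  - auto.
  - intros S' c' e' Hf. destruct (D S' c' e') as [S2 [c2 [e2 H2]]].
    apply (H2 S2 c2 (wext_refl _)). eapply force_mono; eauto.
  - split; [apply IHf1|apply IHf2]; auto; (eapply dense_mono; [|exact D]); intros ? []; auto.
  - apply dense_idem; auto.
  - intros S' c' e' Hf. apply IHf2; auto. intros S2 c2 e2.
    destruct (D S2 c2 (wext_trans _ _ _ e' e2)) as [S3 [c3 [e3 H3]]].
    exists S3; split; [|split]; auto. apply H3; auto. apply wext_refl.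
    eapply force_mono; [|exact Hf]. eapply wext_trans; eauto.
  - apply dense_idem; auto.
Qed.

Lemma force_emb {A} Th R (a : fm A) : forall S, cons S -> (force Th R (emb a) S <-> fin S a).
Proof.
  induction a; simpl; intros S c.
  - tauto.
  - split; [tauto|intros H; apply c; auto].
  - split; auto. intros _. exists []; split; [intros _ []|intros v _; simpl; auto].
  - split.
    + intros H. apply NNPP; intros Hn.
      apply (H _ (cons_add S a Hn) (wext_add _ _)). apply IHa. apply cons_add; auto.
      apply fin_in; right; auto.
    + intros H S' c' e' Hf. apply IHa in Hf; auto. apply c'.
      eapply fin_2; [|exact Hf|eapply fin_mono; eauto]. simpl; auto.
  - rewrite IHa1, IHa2; auto. split.
    + intros [H1 H2]; eapply fin_2; [|exact H1|exact H2]; simpl; auto.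
    + intros H; split; (eapply fin_1; [|exact H]); simpl; tauto.
  - split.
    + intros D. apply dense_fin; auto. eapply dense_monoc; [|exact D].
      intros S' c' [H|H]; [apply IHa1 in H|apply IHa2 in H]; auto; (eapply fin_1; [|exact H]); simpl; auto.
    + intros H S' c' e'. destruct (classic (fin S' a1)) as [H1|H1].
      * exists S'; split; [|split]; auto. apply wext_refl. left; apply IHa1; auto.
      * exists (addw S' (FNeg a1)); split; [|split]; auto using cons_addn, wext_add.
        right. apply IHa2; auto using cons_addn.
        apply (fin_2 _ (FOr a1 a2) (FNeg a1)); [|eapply fin_mono; [|exact H]|apply fin_in; right; reflexivity].
        { simpl; tauto. } eapply wext_trans; eauto using wext_add.
  - split.
    + intros H. destruct (classic (fin S (FNeg a1))) as [H1|H1].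
      * eapply fin_1; [|exact H1]. simpl; tauto.
      * apply fin_ded. apply IHa2; auto using cons_add. apply H; auto using cons_add, wext_add.
        apply IHa1; auto using cons_add. apply fin_in; right; auto.
    + intros H S' c' e' Hf. apply IHa1 in Hf; auto. apply IHa2; auto.
      eapply fin_2; [|exact Hf|eapply fin_mono; eauto]. simpl; auto.
Qed.

Definition valid {A} Th R (G D : fset A) :=
  forall S, cons S -> (forall g, G g -> force Th R g S) ->
    dense (fun S => exists d, D d /\ force Th R d S) S.

Lemma Dmono {A} Th R (D : fset A) S S' : wext S S' ->
  (exists d, D d /\ force Th R d S) -> exists d, D d /\ force Th R d S'.
Proof. intros e [d [Hd Hf]]; exists d; split; eauto using force_mono. Qed.

Lemma Gmono {A} Th R (G : fset A) S S' : wext S S' ->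
  (forall g, G g -> force Th R g S) -> forall g, G g -> force Th R g S'.
Proof. intros e H g Hg; eauto using force_mono. Qed.

Lemma bigand_in {A} (l : list (fm A)) v : eval v (bigand l) -> forall x, In x l -> eval v x.
Proof.
  induction l as [|y l IH]; simpl; [tauto|].
  destruct l as [|z l]; simpl in *.
  - intros H x [<-|[]]; auto.
  - intros [H1 H2] x [<-|Hx]; auto.
Qed.

Lemma or_mono {A} Th R (f g : bfm A) S S' : wext S S' ->
  force Th R f S \/ force Th R g S -> force Th R f S' \/ force Th R g S'.
Proof. intros e [H|H]; [left|right]; eapply force_mono; eauto. Qed.

Lemma valid_here {A} Th R (G D : fset A) S : valid Th R G D -> cons S ->
  (forall g, G g -> force Th R g S) ->
  exists S2, cons S2 /\ wext S S2 /\ exists d, D d /\ force Th R d S2.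
Proof. intros V c HG. exact (V S c HG S c (wext_refl _)). Qed.

Lemma soundness {A} Th R (G D : fset A) : Der Th R G D -> valid Th R G D.
Proof.
  induction 1; intros S c HG.
  - apply dense_intro. { intros; eapply Dmono; eauto. } exists p; split; [reflexivity|apply HG; reflexivity].
  - destruct (HG BBot eq_refl).
  - apply dense_intro. { intros; eapply Dmono; eauto. } exists BTop; split; [reflexivity|simpl; auto].
  - eapply dense_mono; [|apply IHDer; auto]. intros S1 [d [Hd Hf]]; exists d; auto.
  - intros S' c' e'.
    destruct (IHDer S c (fun g Hg => HG g (or_introl Hg)) S' c' e') as [S1 [c1 [e1 [d [ [Hd| ->] Hf]]]]].
    + exists S1; eauto.
    + exfalso. apply (HG (BNeg f) (or_intror eq_refl) S1 c1); auto. eapply wext_trans; eauto.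
  - intros S' c' e'.
    destruct (classic (exists S1, cons S1 /\ wext S' S1 /\ force Th R f S1)) as [ [S1 [c1 [e1 f1]]]|N].
    + assert (e01 : wext S S1) by (eapply wext_trans; eauto).
      destruct (valid_here _ _ _ _ S1 IHDer c1) as [S2 [c2 [e2 [d [Hd Hf]]]]].
      * intros g [Hg| ->]; auto. eapply force_mono; eauto.
      * exists S2; split; [|split]; auto. eapply wext_trans; eauto. exists d; split; auto. left; auto.
    + exists S'; split; [|split]; auto. apply wext_refl. exists (BNeg f); split; [right; auto|].
      intros S1 c1 e1 f1; apply N; eauto.
  - apply IHDer; auto. destruct (HG (BAnd f g) (or_intror eq_refl)) as [Hf Hg].
    intros x [ [Hx| ->]| ->]; auto. apply HG; left; auto.
  - intros S' c' e'.
    destruct (IHDer1 S c HG S' c' e') as [S1 [c1 [e1 [d [ [Hd| ->] Hf]]]]].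
    + exists S1; split; [|split]; auto. exists d; split; auto. left; auto.
    + assert (e01 : wext S S1) by (eapply wext_trans; eauto).
      destruct (IHDer2 S c HG S1 c1 e01) as [S2 [c2 [e2 [d [ [Hd| ->] Hg]]]]].
      * exists S2; split; [|split]; auto. eapply wext_trans; eauto. exists d; split; auto. left; auto.
      * exists S2; split; [|split]; auto. eapply wext_trans; eauto. exists (BAnd f g); split; [right; auto|].
        split; auto. eapply force_mono; eauto.
  - intros S' c' e'.
    destruct (HG (BOr f g) (or_intror eq_refl) S' c' e') as [S1 [c1 [e1 Hfg]]].
    assert (e01 : wext S S1) by (eapply wext_trans; eauto).
    assert (HG1 := Gmono _ _ _ _ _ e01 (fun x Hx => HG x (or_introl Hx))).
    destruct Hfg as [Hf|Hg].
    + destruct (IHDer1 S1 c1 (fun x Hx => match Hx with or_introl H0 => HG1 x H0 | or_intror E => eq_ind_r (fun y => force Th R y S1) Hf E end) S1 c1 (wext_refl _)) as [S2 [c2 [e2 HD]]].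
      exists S2; split; [|split]; auto. eapply wext_trans; eauto.
    + destruct (IHDer2 S1 c1 (fun x Hx => match Hx with or_introl H0 => HG1 x H0 | or_intror E => eq_ind_r (fun y => force Th R y S1) Hg E end) S1 c1 (wext_refl _)) as [S2 [c2 [e2 HD]]].
      exists S2; split; [|split]; auto. eapply wext_trans; eauto.
  - intros S' c' e'.
    destruct (IHDer S c HG S' c' e') as [S1 [c1 [e1 [d [ [ [Hd| ->]| ->] Hf]]]]].
    + exists S1; split; [|split]; auto. exists d; split; auto. left; auto.
    + exists S1; split; [|split]; auto. exists (BOr f g); split; [right; auto|].
      apply dense_intro; [intros S2 S3 H9 e; eapply or_mono; eauto|auto].
    + exists S1; split; [|split]; auto. exists (BOr f g); split; [right; auto|].
      apply dense_intro; [intros S2 S3 H9 e; eapply or_mono; eauto|auto].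
  - intros S' c' e'.
    assert (HG0 : forall x, G x -> force Th R x S) by (intros x Hx; apply HG; left; auto).
    destruct (IHDer1 S c HG0 S' c' e') as [S1 [c1 [e1 [d [ [Hd| ->] Hf]]]]].
    + exists S1; split; [|split]; auto. exists d; split; auto.
    + assert (e01 : wext S S1) by (eapply wext_trans; eauto).
      assert (Hg : force Th R g S1) by (apply (HG (BImp f g) (or_intror eq_refl)); auto).
      destruct (valid_here _ _ _ _ S1 IHDer2 c1) as [S2 [c2 [e2 HD]]].
      * intros x [Hx| ->]; auto. eapply force_mono; eauto.
      * exists S2; split; [|split]; auto. eapply wext_trans; eauto.
  - intros S' c' e'.
    destruct (classic (exists S1, cons S1 /\ wext S' S1 /\ exists d, D d /\ force Th R d S1)) as [ [S1 [c1 [e1 [d [Hd Hf]]]]]|N].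
    + exists S1; split; [|split]; auto. exists d; split; auto. left; auto.
    + exists S'; split; [|split]; auto. apply wext_refl. exists (BImp f g); split; [right; auto|].
      intros S1 c1 e1 f1.
      assert (e01 : wext S S1) by (eapply wext_trans; eauto).
      apply force_reg; auto. intros S2 c2 e2.
      destruct (IHDer S1 c1) with (S' := S2) as [S3 [c3 [e3 [d [ [Hd| ->] Hf]]]]]; auto.
      * intros x [Hx| ->]; auto. eapply force_mono; eauto.
      * exfalso; apply N. exists S3; split; [|split]; auto.
        eapply wext_trans; [exact e1|]. eapply wext_trans; eauto. exists d; auto.
      * exists S3; auto.
  - intros S' c' e'.
    destruct (IHDer S c HG S' c' e') as [S1 [c1 [e1 [d [ [Hd| ->] Hf]]]]].
    + exists S1; split; [|split]; auto. exists d; split; auto. left; auto.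
    + exists S1; split; [|split]; auto. exists (Box p); split; [right; auto|].
      apply dense_intro. { intros S2 S3 [l0 [Hq Hl]] e; exists l0; split; eauto using fin_mono. }
      exists l; split; [split; auto|]. apply (force_emb Th R); auto.
  - rename H0 into H1. intros S' c' e'.
    destruct (HG (Box p) (or_intror eq_refl) S' c' e') as [S1 [c1 [e1 [l [ [Hth Hr] Hl]]]]].
    assert (e01 : wext S S1) by (eapply wext_trans; eauto).
    destruct (valid_here _ _ _ _ S1 (H1 l Hth Hr) c1) as [S2 [c2 [e2 HD]]].
    + intros x [Hx|[y [Hy ->]]].
      * eapply force_mono; eauto. apply HG; left; auto.
      * apply (force_emb Th R); auto. eapply fin_1; [|exact Hl]. intros v Hv.
        eapply bigand_in; eauto.
    + exists S2; split; [|split]; auto. eapply wext_trans; eauto.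
  - intros S' c' e'.
    destruct (IHDer1 S c (fun x Hx => HG x (or_introl Hx)) S' c' e') as [S1 [c1 [e1 [d [ [Hd| ->] Hf]]]]].
    + exists S1; split; [|split]; auto. exists d; split; auto. left; auto.
    + assert (e01 : wext S S1) by (eapply wext_trans; eauto).
      destruct (valid_here _ _ _ _ S1 IHDer2 c1) as [S2 [c2 [e2 [d [Hd Hd']]]]].
      * intros x [Hx| ->]; auto. eapply force_mono; eauto. apply HG; right; auto.
      * exists S2; split; [|split]; auto. eapply wext_trans; eauto. exists d; split; auto. right; auto.
Qed.

Fixpoint bigor {A} (l : list (fm A)) : fm A :=
  match l with [] => FBot | x :: r => FOr x (bigor r) end.

Lemma weak {A} Th R (G D G' D' : fset A) : Der Th R G D -> subset G G' -> subset D D' -> Der Th R G' D'.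
Proof. intros; eapply D_weak; eauto. Qed.

Lemma bot_any {A} Th R (D : fset A) : Der Th R (sing BBot) D.
Proof. eapply weak; [apply D_bot|intros x; auto|intros x []]. Qed.

Lemma orL_list {A} Th R (D : fset A) xs :
  (forall x, In x xs -> Der Th R (sing (emb x)) D) -> Der Th R (sing (emb (bigor xs))) D.
Proof.
  induction xs as [|x xs IH]; intros H; simpl.
  - apply bot_any.
  - eapply weak; [apply (@D_orL _ Th R sempty D)|intros y [ []|Hy]; exact Hy|intros y; auto].
    + eapply weak; [apply H; left; auto|intros y Hy; right; exact Hy|intros y; auto].
    + eapply weak; [apply IH; intros; apply H; right; auto|intros y Hy; right; exact Hy|intros y; auto].
Qed.

Lemma orR_list {A} Th R (G : fset A) x xs :
  In x xs -> Der Th R G (sing (emb x)) -> Der Th R G (sing (emb (bigor xs))).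
Proof.
  induction xs as [|y xs IH]; intros Hin H; simpl; [destruct Hin|].
  eapply weak; [apply (@D_orR _ Th R G sempty)|intros z; auto|intros z [ []|Hz]; exact Hz].
  destruct Hin as [<-|Hin].
  - eapply weak; [exact H|intros z; auto|intros z Hz; left; right; exact Hz].
  - eapply weak; [apply IH; auto|intros z; auto|intros z Hz; right; exact Hz].
Qed.

Lemma andR_list {A} Th R (G : fset A) xs :
  (forall x, In x xs -> Der Th R G (sing (emb x))) -> Der Th R G (sing (emb (bigand xs))).
Proof.
  induction xs as [|x xs IH]; intros H.
  - simpl. eapply weak; [apply D_top|intros z []|intros z; auto].
  - destruct xs as [|y xs].
    + apply H; left; auto.
    + change (emb (bigand (x :: y :: xs))) with (BAnd (emb x) (emb (bigand (y :: xs)))).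
      eapply weak; [apply (@D_andR _ Th R G sempty)|intros z; auto|intros z [ []|Hz]; exact Hz].
      * eapply weak; [apply H; left; auto|intros z; auto|intros z Hz; right; exact Hz].
      * eapply weak; [apply IH; intros; apply H; right; auto|intros z; auto|intros z Hz; right; exact Hz].
Qed.

Lemma andL_list {A} Th R (D : fset A) xs : forall G,
  Der Th R (sunion G (of_list xs)) D -> Der Th R (add G (emb (bigand xs))) D.
Proof.
  induction xs as [|x xs IH]; intros G H.
  - eapply weak; [exact H| |intros z; auto]. intros z [Hz|[f [[] _]]]; left; auto.
  - destruct xs as [|y xs].
    + eapply weak; [exact H| |intros z; auto]. intros z [Hz|[f [[<-|[]] ->]]]; [left|right]; auto.
    + change (emb (bigand (x :: y :: xs))) with (BAnd (emb x) (emb (bigand (y :: xs)))).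
      apply D_andL. apply IH.
      eapply weak; [exact H| |intros z; auto].
      intros z [Hz|[f [[<-|Hf] ->]]].
      * left; left; auto.
      * left; right; auto.
      * right; exists f; auto.
Qed.


Lemma bigor_in {A} (xs : list (fm A)) x v : In x xs -> eval v x -> eval v (bigor xs).
Proof. induction xs as [|y xs IH]; simpl; [tauto|]. intros [<-|H] Hx; [left|right]; auto. Qed.

Lemma extract {A} Th R (Gamma : fm A -> Prop) p (L : list (fm A)) :
  (forall x, In x L -> Gamma x \/ exists l, qual Th R p l /\ x = FNeg (bigand (map fst l))) ->
  exists L0 ls, (forall x, In x L0 -> Gamma x) /\ (forall l, In l ls -> qual Th R p l) /\
    forall x, In x L -> In x L0 \/ exists l, In l ls /\ x = FNeg (bigand (map fst l)).
Proof.
  induction L as [|y L IH]; intros H.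
  - exists [], []; split; [|split]; intros ? [] .
  - destruct IH as [L0 [ls [H1 [H2 H3]]]]. { intros; apply H; right; auto. }
    destruct (H y (or_introl eq_refl)) as [Hy|[l [Hl ->]]].
    + exists (y :: L0), ls; split; [|split]; auto.
      * intros x [<-|Hx]; auto.
      * intros x [<-|Hx]; [left; left; auto|]. destruct (H3 x Hx) as [H4|H4]; [left; right; auto|right; auto].
    + exists L0, (l :: ls); split; [|split]; auto.
      * intros x [<-|Hx]; auto.
      * intros x [<-|Hx]; [right; exists l; split; [left|]; auto|].
        destruct (H3 x Hx) as [H4|[l' [H5 H6]]]; [left; auto|right; exists l'; split; [right|]; auto].
Qed.

Theorem mainTheorem17 (A : Type) (Th : causal_theory A)
  (R : fset A -> fset A -> Prop) (HR : S_fixpoint Th R)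
  (Gamma : fm A -> Prop) (p : bfm A) :
  Der Th R (emb_set Gamma) (sing (Box p)) ->
  exists (Gamma' : list (fm A)) (a b : fm A),
    (forall g, In g Gamma' -> Gamma g) /\
    cl_conseq Gamma' a /\
    Der Th R (sing (emb a)) (sing (Box (emb b))) /\
    Der Th R (sing (emb b)) (sing p).

Proof.
  intros HD. apply soundness in HD as V.
  destruct (classic (cons Gamma)) as [c|nc].
  2:{ apply NNPP in nc. destruct nc as [L [HL HC]].
      exists L, FBot, FBot. split; [auto|split; [auto|split; simpl; apply bot_any]]. }
  assert (HG : forall g, emb_set Gamma g -> force Th R g Gamma).
  { intros g [f [Hf ->]]. apply force_emb; auto. apply fin_in; auto. }
  assert (HB : force Th R (Box p) Gamma).
  { apply force_reg; auto. eapply dense_mono; [|exact (V Gamma c HG)].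
    intros S [d [Hd Hf]]. rewrite <- Hd; exact Hf. }
  assert (Ex : exists ls, (forall l, In l ls -> qual Th R p l) /\
     fin Gamma (bigor (map (fun l => bigand (map fst l)) ls))).
  { apply NNPP; intro N.
    set (S' := fun x => Gamma x \/ exists l, qual Th R p l /\ x = FNeg (bigand (map fst l))).
    assert (cS' : cons S').
    { intros [L [HL HC]]. destruct (extract Th R Gamma p L HL) as [L0 [ls [H1 [H2 H3]]]].
      apply N. exists ls; split; auto. exists L0; split; auto.
      intros v Hv. apply NNPP; intro Hn. apply (HC v). intros x Hx.
      destruct (H3 x Hx) as [H4|[l [Hl ->]]]; [apply Hv; auto|].
      simpl. intro Hb; apply Hn. eapply bigor_in; [|exact Hb]. apply in_map_iff; eauto. }
    destruct (HB S' cS' (fun x Hx => or_introl Hx)) as [S2 [c2 [e2 [l [Hq Hf]]]]].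
    apply c2. apply (fin_2 _ (bigand (map fst l)) (FNeg (bigand (map fst l)))); [simpl; auto|exact Hf|].
    apply fin_in, e2. right; exists l; auto. }
  destruct Ex as [ls [Hq [L [HL HC]]]].
  exists L, (bigor (map (fun l => bigand (map fst l)) ls)), (bigor (map (fun l => bigand (map snd l)) ls)).
  split; [auto|split; [auto|split]].
  - apply orL_list. intros x Hx. apply in_map_iff in Hx as [l [<- Hl]].
    destruct (Hq l Hl) as [Hth Hr].
    eapply weak; [apply (@D_boxR _ Th R (sing (emb (bigand (map fst l)))) sempty l)|intros z; auto|intros z [ []|Hz]; exact Hz].
    + exact Hth.
    + apply HR. apply orR_list with (x := bigand (map snd l)); [apply in_map_iff; eauto|].
      apply andR_list. intros x Hx. eapply weak; [apply (@D_ax _ Th R (emb x))|intros z Hz; exists x; split; auto|intros z; auto].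
    + eapply weak; [apply (@D_ax _ Th R (emb (bigand (map fst l))))|intros z; auto|intros z Hz; right; exact Hz].
  - apply orL_list. intros x Hx. apply in_map_iff in Hx as [l [<- Hl]].
    destruct (Hq l Hl) as [Hth Hr]. apply HR in Hr.
    eapply weak; [apply (andL_list Th R (sing p) (map snd l) sempty)|intros z [ []|Hz]; exact Hz|intros z; auto].
    eapply weak; [exact Hr|intros z Hz; right; exact Hz|intros z; auto].
Qed.
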